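(* Suppose that $S\cap(\alpha\times\{b\}\times\{b\})\neq\emptyset$ for all $b\in\alpha$. Let $(\mathcal A,xAByABz)$ be a nanoword over $\alpha$, where $A,B\in\mathcal A$ with $|B|=\tau(|A|)$ and $x,y,z$ are words in $\mathcal A\setminus\{A,B\}$. Then $(\mathcal A,xAByABz)\simeq_S(\mathcal A\setminus\{A,B\},xyz)$.
   Context: Fix a set $\alpha$ with an involution $\tau$ and a subset $S\subset\alpha\times\alpha\times\alpha$. An $\alpha$-alphabet is a set $\mathcal A$ with a map $A\mapsto|A|\in\alpha$. A nanoword over $\alpha$ is a pair $(\mathcal A,w)$ with $\mathcal A$ a finite $\alpha$-alphabet and $w$ a word in which each letter of $\mathcal A$ occurs exactly twice. Nanowords are isomorphic if a bijection of alphabets preserving $|\cdot|$ carries one word letterwise to the other. $S$-homotopy moves ($x,y,z,t$ words in the remaining letters; smaller alphabets carry the restricted projection): (1) $(\mathcal A,xAAy)\mapsto(\mathcal A\setminus\{A\},xy)$; (2) $(\mathcal A,xAByBAz)\mapsto(\mathcal A\setminus\{A,B\},xyz)$ if $|B|=\tau(|A|)$; (3) $(\mathcal A,xAByACzBCt)\mapsto(\mathcal A,xBAyCAzCBt)$ if $A,B,C$ are distinct and $(|A|,|B|,|C|)\in S$. $S$-homotopy $\simeq_S$ is the equivalence relation generated by isomorphisms, these moves and their inverses. *)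

(* Defs.v *)
From mathcomp Require Import all_boot.
From Stdlib Require Import Relation_Operators.
Set Implicit Arguments. Unset Strict Implicit. Unset Printing Implicit Defensive.

(* A nanoword over alpha is a
   word w : seq nat in which every letter occurring occurs exactly twice,
   together with a projection p : nat -> alpha.  The alphabet of the
   nanoword is the set of letters occurring in w; values of p outside it
   are irrelevant (isomorphism ignores them). *)
Record nanoword (alpha : Type) := NW { nw_word : seq nat; nw_proj : nat -> alpha }.

Definition wf_word (w : seq nat) : Prop := forall a, a \in w -> count_mem a w = 2.

Definition is_nanoword (alpha : Type) (u : nanoword alpha) : Prop := wf_word (nw_word u).

Definition nw_iso (alpha : Type) (u v : nanoword alpha) : Prop :=
  exists f : nat -> nat,
    {in nw_word u &, injective f} /\
    map f (nw_word u) = nw_word v /\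
    {in nw_word u, forall a, nw_proj v (f a) = nw_proj u a}.

Inductive hmove (alpha : Type) (tau : alpha -> alpha) (S : alpha -> alpha -> alpha -> Prop)
  : nanoword alpha -> nanoword alpha -> Prop :=
| hmove1 (x y : seq nat) (A : nat) (p : nat -> alpha) :
    wf_word (x ++ A :: A :: y) -> A \notin x -> A \notin y ->
    hmove tau S (NW (x ++ A :: A :: y) p) (NW (x ++ y) p)
| hmove2 (x y z : seq nat) (A B : nat) (p : nat -> alpha) :
    wf_word (x ++ A :: B :: y ++ B :: A :: z) -> A != B ->
    A \notin x -> A \notin y -> A \notin z ->
    B \notin x -> B \notin y -> B \notin z ->
    p B = tau (p A) ->
    hmove tau S (NW (x ++ A :: B :: y ++ B :: A :: z) p) (NW (x ++ y ++ z) p)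
| hmove3 (x y z t : seq nat) (A B C : nat) (p : nat -> alpha) :
    wf_word (x ++ A :: B :: y ++ A :: C :: z ++ B :: C :: t) ->
    A != B -> A != C -> B != C ->
    A \notin x -> A \notin y -> A \notin z -> A \notin t ->
    B \notin x -> B \notin y -> B \notin z -> B \notin t ->
    C \notin x -> C \notin y -> C \notin z -> C \notin t ->
    S (p A) (p B) (p C) ->
    hmove tau S (NW (x ++ A :: B :: y ++ A :: C :: z ++ B :: C :: t) p)
                (NW (x ++ B :: A :: y ++ C :: A :: z ++ C :: B :: t) p).

Definition hstep (alpha : Type) (tau : alpha -> alpha) (S : alpha -> alpha -> alpha -> Prop)
  (u v : nanoword alpha) : Prop := nw_iso u v \/ hmove tau S u v.

Definition S_homotopic (alpha : Type) (tau : alpha -> alpha) (S : alpha -> alpha -> alpha -> Prop)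
  : nanoword alpha -> nanoword alpha -> Prop :=
  clos_refl_sym_trans (nanoword alpha) (hstep tau S).

(* Main.v *)
Require Import Defs.
From mathcomp Require Import all_boot.
From Stdlib Require Import Relation_Operators.
From mathcomp Require Import zify.

Set Implicit Arguments. Unset Strict Implicit. Unset Printing Implicit Defensive.

Lemma count_cons (a x : nat) (s : seq nat) : count_mem a (x :: s) = (x == a) + count_mem a s.
Proof. by []. Qed.

Lemma wfP (w : seq nat) :
  (forall a, count_mem a w = 0 \/ count_mem a w = 2) -> wf_word w.
Proof.
move=> H a Ha; case: (H a) => // /count_memPn; by rewrite Ha.
Qed.

Lemma wfP' (w : seq nat) a : wf_word w -> count_mem a w = 0 \/ count_mem a w = 2.
Proof.
move=> H; case Ha: (a \in w); first by right; apply: H.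
by left; apply/count_memPn; rewrite Ha.
Qed.

Lemma fresh_bound (s : seq nat) L a :
  L \notin s -> count_mem a s <= 2 -> count_mem a s + 2 * (L == a) <= 2.
Proof.
move=> HL Hs; case: eqP => [<-|_]; last by rewrite muln0 addn0.
by move/count_memPn: HL => ->.
Qed.

Lemma b1 (L a : nat) : (L == a) <= 1.
Proof. by case: (L == a). Qed.

Lemma pair_bound (L M a : nat) : L != M -> (L == a) + (M == a) <= 1.
Proof.
move=> h; case: (eqVneq L a) => [<-|_] /=; last exact: b1.
by rewrite eq_sym (negbTE h).
Qed.

Lemma le_sumn (s : seq nat) a : a \in s -> a <= sumn s.
Proof.
elim: s => //= b s IH; rewrite inE => /orP [/eqP ->|/IH]; first exact: leq_addr.
move=> h; apply: leq_trans h _; exact: leq_addl.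
Qed.

Ltac clia := repeat match goal with H : _ |- _ => clear H end; lia.

Ltac notin_tac :=
  rewrite ?(mem_cat, inE) /=;
  repeat match goal with
  | H : is_true (negb ?b) |- context [?b] => rewrite (negbTE H) /=
  end; try done.

Section Moves.
Variables (alpha : Type) (tau : alpha -> alpha) (S : alpha -> alpha -> alpha -> Prop).

Lemma hm1 w w' (x y : seq nat) A (p : nat -> alpha) :
  w = x ++ A :: A :: y -> w' = x ++ y ->
  wf_word w -> A \notin x -> A \notin y -> hstep tau S (NW w p) (NW w' p).
Proof. by move=> -> -> *; right; apply: hmove1. Qed.

Lemma hm2 w w' (x y z : seq nat) A B (p : nat -> alpha) :
  w = x ++ A :: B :: y ++ B :: A :: z -> w' = x ++ y ++ z ->
  wf_word w -> A != B ->
    A \notin x -> A \notin y -> A \notin z ->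
    B \notin x -> B \notin y -> B \notin z ->
    p B = tau (p A) -> hstep tau S (NW w p) (NW w' p).
Proof. by move=> -> -> *; right; apply: hmove2. Qed.

Lemma hm3 w w' (x y z t : seq nat) A B C (p : nat -> alpha) :
  w = x ++ A :: B :: y ++ A :: C :: z ++ B :: C :: t ->
  w' = x ++ B :: A :: y ++ C :: A :: z ++ C :: B :: t ->
  wf_word w ->
    A != B -> A != C -> B != C ->
    A \notin x -> A \notin y -> A \notin z -> A \notin t ->
    B \notin x -> B \notin y -> B \notin z -> B \notin t ->
    C \notin x -> C \notin y -> C \notin z -> C \notin t ->
    S (p A) (p B) (p C) -> hstep tau S (NW w p) (NW w' p).
Proof. by move=> -> -> *; right; apply: hmove3. Qed.

Lemma iso_proj w (p p' : nat -> alpha) :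
  {in w, forall a, p' a = p a} -> hstep tau S (NW w p) (NW w p').
Proof.
move=> H; left; exists id; split; first by move=> ? ? _ _.
by split; [rewrite map_id | move=> a /H].
Qed.
End Moves.

Section Core.
Variables (alpha : Type) (tau : alpha -> alpha) (S : alpha -> alpha -> alpha -> Prop).

Lemma core (x y z : seq nat) (A B P Q U V : nat) (p : nat -> alpha) (c : alpha) :
  involutive tau -> S c (p B) (p B) ->
  wf_word (x ++ A :: B :: y ++ A :: B :: z) ->
  A != B ->
  A \notin x -> A \notin y -> A \notin z ->
  B \notin x -> B \notin y -> B \notin z ->
  P \notin x -> P \notin y -> P \notin z ->
  Q \notin x -> Q \notin y -> Q \notin z ->
  U \notin x -> U \notin y -> U \notin z ->
  V \notin x -> V \notin y -> V \notin z ->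
  P != A -> P != B -> Q != A -> Q != B -> U != A -> U != B -> V != A -> V != B ->
  P != Q -> P != U -> P != V -> Q != U -> Q != V -> U != V ->
  p B = tau (p A) ->
  S_homotopic tau S (NW (x ++ A :: B :: y ++ A :: B :: z) p) (NW (x ++ y ++ z) p).
Proof.
move=> tauK HS wf0 hAB hAx hAy hAz hBx hBy hBz hPx hPy hPz hQx hQy hQz hUx hUy hUz
  hVx hVy hVz hPA hPB hQA hQB hUA hUB hVA hVB hPQ hPU hPV hQU hQV hUV hpB.
have hBA := hAB; rewrite eq_sym in hBA.
have hAP := hPA; rewrite eq_sym in hAP. have hBP := hPB; rewrite eq_sym in hBP.
have hAQ := hQA; rewrite eq_sym in hAQ. have hBQ := hQB; rewrite eq_sym in hBQ.
have hAU := hUA; rewrite eq_sym in hAU. have hBU := hUB; rewrite eq_sym in hBU.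
have hAV := hVA; rewrite eq_sym in hAV. have hBV := hVB; rewrite eq_sym in hBV.
have hQP := hPQ; rewrite eq_sym in hQP. have hUP := hPU; rewrite eq_sym in hUP.
have hVP := hPV; rewrite eq_sym in hVP. have hUQ := hQU; rewrite eq_sym in hUQ.
have hVQ := hQV; rewrite eq_sym in hVQ. have hVU := hUV; rewrite eq_sym in hVU.
pose p' n := if n == P then tau c else if n == Q then c else if n == U then p A
             else if n == V then p B else p n.
have p'A : p' A = p A by rewrite /p' (negbTE hAP) (negbTE hAQ) (negbTE hAU) (negbTE hAV).
have p'B : p' B = p B by rewrite /p' (negbTE hBP) (negbTE hBQ) (negbTE hBU) (negbTE hBV).
have p'P : p' P = tau c by rewrite /p' eqxx.
have p'Q : p' Q = c by rewrite /p' (negbTE hQP) eqxx.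
have p'U : p' U = p A by rewrite /p' (negbTE hUP) (negbTE hUQ) eqxx.
have p'V : p' V = p B by rewrite /p' (negbTE hVP) (negbTE hVQ) (negbTE hVU) eqxx.
have neqs : forall a, A != a -> B != a -> P != a -> Q != a -> U != a -> V != a ->
   count_mem a x + count_mem a y + count_mem a z = 0 \/
   count_mem a x + count_mem a y + count_mem a z = 2.
  move=> a nA nB nP nQ nU nV; have := wfP' a wf0; rewrite !(count_cat, count_cons) /=.
  rewrite (negbTE nA) (negbTE nB) /= !add0n; clia.
have wft : forall w : seq nat,
   (count_mem A w = 0 \/ count_mem A w = 2) ->
   (count_mem B w = 0 \/ count_mem B w = 2) ->
   (count_mem P w = 0 \/ count_mem P w = 2) ->
   (count_mem Q w = 0 \/ count_mem Q w = 2) ->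
   (count_mem U w = 0 \/ count_mem U w = 2) ->
   (count_mem V w = 0 \/ count_mem V w = 2) ->
   (forall a, A != a -> B != a -> P != a -> Q != a -> U != a -> V != a ->
      count_mem a w = count_mem a x + count_mem a y + count_mem a z) -> wf_word w.
  move=> w cA cB cP cQ cU cV H; apply: wfP => a.
  case: (eqVneq A a) => [<-//|nA]; case: (eqVneq B a) => [<-//|nB].
  case: (eqVneq P a) => [<-//|nP]; case: (eqVneq Q a) => [<-//|nQ].
  case: (eqVneq U a) => [<-//|nU]; case: (eqVneq V a) => [<-//|nV].
  by rewrite H //; apply: neqs.
have cnt := (count_memPn hAx, count_memPn hAy, count_memPn hAz,
   count_memPn hBx, count_memPn hBy, count_memPn hBz,
   count_memPn hPx, count_memPn hPy, count_memPn hPz,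
   count_memPn hQx, count_memPn hQy, count_memPn hQz,
   count_memPn hUx, count_memPn hUy, count_memPn hUz,
   count_memPn hVx, count_memPn hVy, count_memPn hVz).
have nq := (negbTE hAB, negbTE hBA, negbTE hAP, negbTE hPA, negbTE hAQ, negbTE hQA,
   negbTE hAU, negbTE hUA, negbTE hAV, negbTE hVA, negbTE hBP, negbTE hPB,
   negbTE hBQ, negbTE hQB, negbTE hBU, negbTE hUB, negbTE hBV, negbTE hVB,
   negbTE hPQ, negbTE hQP, negbTE hPU, negbTE hUP, negbTE hPV, negbTE hVP,
   negbTE hQU, negbTE hUQ, negbTE hQV, negbTE hVQ, negbTE hUV, negbTE hVU).
pose W0 := x ++ A :: B :: y ++ A :: B :: z.
pose W1 := x ++ P :: Q :: A :: B :: Q :: P :: y ++ A :: B :: z.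
pose W2 := x ++ P :: U :: V :: Q :: A :: B :: Q :: P :: y ++ A :: B :: V :: U :: z.
pose W3 := x ++ P :: U :: Q :: V :: A :: Q :: B :: P :: y ++ A :: V :: B :: U :: z.
pose W4 := x ++ P :: U :: Q :: Q :: B :: P :: y ++ B :: U :: z.
pose W5 := x ++ P :: U :: B :: P :: y ++ B :: U :: z.
pose W6 := x ++ P :: P :: y ++ z.
pose W7 := x ++ y ++ z.
Ltac wfsolve wft cnt nq := apply: wft;
  [ rewrite !(count_cat, count_cons) /= ?cnt ?nq ?eqxx /=; by [left|right]
  | rewrite !(count_cat, count_cons) /= ?cnt ?nq ?eqxx /=; by [left|right]
  | rewrite !(count_cat, count_cons) /= ?cnt ?nq ?eqxx /=; by [left|right]
  | rewrite !(count_cat, count_cons) /= ?cnt ?nq ?eqxx /=; by [left|right]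
  | rewrite !(count_cat, count_cons) /= ?cnt ?nq ?eqxx /=; by [left|right]
  | rewrite !(count_cat, count_cons) /= ?cnt ?nq ?eqxx /=; by [left|right]
  | move=> a; rewrite !(count_cat, count_cons) /=; do 6 (move/negbTE; first [move=> -> | move=> _]); rewrite /=; clia].
have wf1 : wf_word W1 by wfsolve wft cnt nq.
have wf2 : wf_word W2 by wfsolve wft cnt nq.
have wf3 : wf_word W3 by wfsolve wft cnt nq.
have wf4 : wf_word W4 by wfsolve wft cnt nq.
have wf5 : wf_word W5 by wfsolve wft cnt nq.
have wf6 : wf_word W6 by wfsolve wft cnt nq.
have E := (catA, cat_cons, cat0s).
apply: (rst_trans _ _ _ (NW W0 p')).
  apply: rst_step; apply: iso_proj => a.
  rewrite /W0 !(mem_cat, inE) => Ha; rewrite /p'.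
  case: (eqVneq a P) => [Ea|_]; first by move: Ha; rewrite Ea; notin_tac.
  case: (eqVneq a Q) => [Ea|_]; first by move: Ha; rewrite Ea; notin_tac.
  case: (eqVneq a U) => [Ea|_]; first by move: Ha; rewrite Ea; notin_tac.
  case: (eqVneq a V) => [Ea|_]; first by move: Ha; rewrite Ea; notin_tac.
  done.
apply: (rst_trans _ _ _ (NW W1 p')).
  apply: rst_sym; apply: rst_step.
  apply: (@hm2 _ _ _ _ _ x [:: A; B] (y ++ A :: B :: z) P Q) => //; try notin_tac.
  by rewrite p'P p'Q tauK.
apply: (rst_trans _ _ _ (NW W2 p')).
  apply: rst_sym; apply: rst_step.
  apply: (@hm2 _ _ _ _ _ (x ++ [:: P]) (Q :: A :: B :: Q :: P :: y ++ [:: A; B]) z U V) => //;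
    try notin_tac; try by rewrite /W2 /W1 -!catA.
  by rewrite p'U p'V.
apply: (rst_trans _ _ _ (NW W3 p')).
  apply: rst_sym; apply: rst_step.
  apply: (@hm3 _ _ _ _ _ (x ++ [:: P; U]) [:: A] (P :: y ++ [:: A]) (U :: z) Q V B) => //;
    try notin_tac; try by rewrite /W3 /W2 -!catA.
  by rewrite p'Q p'V p'B.
apply: (rst_trans _ _ _ (NW W4 p')).
  apply: rst_step.
  apply: (@hm2 _ _ _ _ _ (x ++ [:: P; U; Q]) (Q :: B :: P :: y) (B :: U :: z) V A) => //;
    try notin_tac; try by rewrite /W3 /W4 -!catA.
  by rewrite p'A p'V hpB tauK.
apply: (rst_trans _ _ _ (NW W5 p')).
  apply: rst_step.
  apply: (@hm1 _ _ _ _ _ (x ++ [:: P; U]) (B :: P :: y ++ B :: U :: z) Q) => //;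
    try notin_tac; try by rewrite /W4 /W5 -!catA.
apply: (rst_trans _ _ _ (NW W6 p')).
  apply: rst_step.
  apply: (@hm2 _ _ _ _ _ (x ++ [:: P]) (P :: y) z U B) => //;
    try notin_tac; try by rewrite /W5 /W6 -!catA.
  by rewrite p'U p'B.
apply: (rst_trans _ _ _ (NW W7 p')).
  apply: rst_step.
  by apply: (@hm1 _ _ _ _ _ x (y ++ z) P) => //; notin_tac.
apply: rst_sym; apply: rst_step; apply: iso_proj => a.
rewrite /W7 !(mem_cat, inE) => Ha; rewrite /p'.
case: (eqVneq a P) => [Ea|_]; first by move: Ha; rewrite Ea; notin_tac.
case: (eqVneq a Q) => [Ea|_]; first by move: Ha; rewrite Ea; notin_tac.
case: (eqVneq a U) => [Ea|_]; first by move: Ha; rewrite Ea; notin_tac.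
case: (eqVneq a V) => [Ea|_]; first by move: Ha; rewrite Ea; notin_tac.
done.
Qed.
End Core.

Theorem lemma3p2 (alpha : Type) (tau : alpha -> alpha)
  (S : alpha -> alpha -> alpha -> Prop) :
  involutive tau ->
  (forall b : alpha, exists a : alpha, S a b b) ->
  forall (x y z : seq nat) (A B : nat) (p : nat -> alpha),
    wf_word (x ++ A :: B :: y ++ A :: B :: z) ->
    A != B ->
    A \notin x -> A \notin y -> A \notin z ->
    B \notin x -> B \notin y -> B \notin z ->
    p B = tau (p A) ->
    S_homotopic tau S (NW (x ++ A :: B :: y ++ A :: B :: z) p) (NW (x ++ y ++ z) p).
Proof.
move=> tauK HS x y z A B p wf0 hAB hAx hAy hAz hBx hBy hBz hpB.
have [c Hc] := HS (p B).
set N := (sumn (x ++ y ++ z ++ [:: A; B])).+1.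
have fr : forall n, N <= n -> n \notin x /\ n \notin y /\ n \notin z /\ n != A /\ n != B.
  move=> n Hn.
  have H : n \notin (x ++ y ++ z ++ [:: A; B]).
    apply/negP => /le_sumn; move: Hn; rewrite /N; clia.
  move: H; rewrite !(mem_cat, inE) !negb_or.
  by case/and3P => -> -> /and3P [-> -> ->].
have [hPx [hPy [hPz [hPA hPB]]]] := fr N (leqnn _).
have [hQx [hQy [hQz [hQA hQB]]]] := fr N.+1 (leqnSn _).
have [hUx [hUy [hUz [hUA hUB]]]] := fr N.+2 ltac:(clia).
have [hVx [hVy [hVz [hVA hVB]]]] := fr N.+3 ltac:(clia).
apply: (@core _ _ _ _ _ _ _ _ N N.+1 N.+2 N.+3 _ c) => //; clia.
Qed.
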